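(* Let $f:A\to B$ be a geometrically closed homomorphism between $\mathscr L$-structures such that the trivial structure $\mathbf 1$ does not embed into $B$. Then $f$ is an immersion. In particular, if $T$ is a strict theory, every geometrically closed homomorphism between models of $T_u$ is an immersion.
   Context: The trivial structure $\mathbf 1$ is the one-element $\mathscr L$-structure in which every relation symbol is interpreted as the full relation. A homomorphism preserves atomic sentences with parameters. A homomorphism $f:A\to B$ is geometrically closed if every sentence $\forall\bar y\,(\bigwedge\Phi(\bar a,\bar y)\to\psi(\bar a,\bar y))$ ($\Phi\cup\{\psi\}$ finite sets of atomic formulas, parameters $\bar a$ from $A$) true in $A$ is true in $B$ of $f\bar a$. $f$ is an immersion if for every positive existential (prenex existential, negation-free) sentence $\phi(\bar a)$ with parameters from $A$, $B\models\phi(f\bar a)$ implies $A\models\phi(\bar a)$. $T_u$ is the set of consequences of $T$ of the form $\forall\bar y\,\neg\bigwedge\Phi$, $\Phi$ a finite set of atomic formulas. $T$ is strict if $\mathbf 1$ embeds in no model of $T$ (equivalently $\mathbf 1\not\models T_u$). *)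

(* Defs.v *)
From mathcomp Require Import all_boot.
From Stdlib Require List.
Set Implicit Arguments.
Unset Strict Implicit.
Unset Printing Implicit Defensive.

Record signature := Signature {
  func : Type; farity : func -> nat;
  rel : Type; rarity : rel -> nat }.

Inductive term (L : signature) (V : Type) : Type :=
  | tvar : V -> term L V
  | tapp : forall f : func L, ('I_(farity f) -> term L V) -> term L V.

Inductive atomic (L : signature) (V : Type) : Type :=
  | aeq : term L V -> term L V -> atomic L V
  | arel : forall R : rel L, ('I_(rarity R) -> term L V) -> atomic L V.

Inductive pqf (L : signature) (V : Type) : Type :=
  | PAtom : atomic L V -> pqf L V
  | PTrue : pqf L V
  | PFalse : pqf L V
  | PAnd : pqf L V -> pqf L V -> pqf L V
  | POr : pqf L V -> pqf L V -> pqf L V.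

Inductive formula (L : signature) : Type :=
  | FAtom : atomic L nat -> formula L
  | FTrue : formula L
  | FFalse : formula L
  | FNot : formula L -> formula L
  | FAnd : formula L -> formula L -> formula L
  | FOr : formula L -> formula L -> formula L
  | FImp : formula L -> formula L -> formula L
  | FAll : nat -> formula L -> formula L
  | FEx : nat -> formula L -> formula L.

Record structure (L : signature) := Structure {
  carrier :> Type;
  nonempty : inhabited carrier;
  funI : forall f : func L, ('I_(farity f) -> carrier) -> carrier;
  relI : forall R : rel L, ('I_(rarity R) -> carrier) -> Prop }.

Fixpoint teval (L : signature) (M : structure L) (V : Type) (v : V -> M)
  (t : term L V) : M :=
  match t with
  | tvar x => v x
  | tapp f args => @funI _ M f (fun i => teval v (args i))
  end.

Definition aholds (L : signature) (M : structure L) (V : Type) (v : V -> M)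
  (a : atomic L V) : Prop :=
  match a with
  | aeq t s => teval v t = teval v s
  | arel R args => @relI _ M R (fun i => teval v (args i))
  end.

Fixpoint pholds (L : signature) (M : structure L) (V : Type) (v : V -> M)
  (p : pqf L V) : Prop :=
  match p with
  | PAtom a => aholds v a
  | PTrue => True
  | PFalse => False
  | PAnd p q => pholds v p /\ pholds v q
  | POr p q => pholds v p \/ pholds v q
  end.

Definition upd (T : Type) (v : nat -> T) (n : nat) (a : T) : nat -> T :=
  fun m => if m == n then a else v m.

Fixpoint fholds (L : signature) (M : structure L) (v : nat -> M)
  (phi : formula L) : Prop :=
  match phi with
  | FAtom a => aholds v a
  | FTrue => True
  | FFalse => False
  | FNot p => ~ fholds v p
  | FAnd p q => fholds v p /\ fholds v q
  | FOr p q => fholds v p \/ fholds v q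
  | FImp p q => fholds v p -> fholds v q
  | FAll n p => forall a : M, fholds (upd v n a) p
  | FEx n p => exists a : M, fholds (upd v n a) p
  end.

(** Formulas with parameters: variables [inl i] are parameters (assigned by
    p), variables [inr j] are the quantified variables (assigned by y). *)
Definition join (T : Type) (p y : nat -> T) : (nat + nat)%type -> T :=
  fun x => match x with inl i => p i | inr j => y j end.

Definition homomorphism (L : signature) (A B : structure L) (f : A -> B) :=
  forall (a : atomic L nat) (p : nat -> A), aholds p a -> aholds (f \o p) a.

Definition embedding (L : signature) (A B : structure L) (f : A -> B) :=
  forall (a : atomic L nat) (p : nat -> A), aholds p a <-> aholds (f \o p) a.

Definition embeds (L : signature) (A B : structure L) :=
  exists f : A -> B, embedding f.

Definition trivial_structure (L : signature) : structure L :=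
  @Structure L unit (inhabits tt) (fun _ _ => tt) (fun _ _ => True).

Definition geom_holds (L : signature) (M : structure L) (p : nat -> M)
  (Phi : list (atomic L (nat + nat)%type)) (psi : atomic L (nat + nat)%type) :=
  forall y : nat -> M, List.Forall (aholds (join p y)) Phi ->
    aholds (join p y) psi.

Definition geom_closed (L : signature) (A B : structure L) (f : A -> B) :=
  forall (Phi : list (atomic L (nat + nat)%type)) (psi : atomic L (nat + nat)%type)
         (p : nat -> A),
    geom_holds p Phi psi -> geom_holds (f \o p) Phi psi.

Definition immersion (L : signature) (A B : structure L) (f : A -> B) :=
  forall (theta : pqf L (nat + nat)%type) (p : nat -> A),
    (exists y : nat -> B, pholds (join (f \o p) y) theta) ->
    exists y : nat -> A, pholds (join p y) theta.

Definition theory (L : signature) := formula L -> Prop.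

Definition models (L : signature) (T : theory L) (M : structure L) :=
  forall phi, T phi -> forall v : nat -> M, fholds v phi.

Definition neg_univ_holds (L : signature) (M : structure L)
  (Phi : list (atomic L nat)) :=
  forall y : nat -> M, ~ List.Forall (aholds y) Phi.

Definition Tu (L : signature) (T : theory L) (Phi : list (atomic L nat)) :=
  forall M : structure L, models T M -> neg_univ_holds M Phi.

Definition models_Tu (L : signature) (T : theory L) (M : structure L) :=
  forall Phi, Tu T Phi -> neg_univ_holds M Phi.

Definition strict (L : signature) (T : theory L) :=
  forall M : structure L, models T M -> ~ embeds (trivial_structure L) M.

(* Main.v *)
Require Import Defs.
From mathcomp Require Import all_boot.
From Stdlib Require Import Classical ClassicalEpsilon FunctionalExtensionality ProofIrrelevance PropExtensionality.
Set Implicit Arguments.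
From mathcomp Require classical_sets filter.
Set Implicit Arguments.
Unset Strict Implicit.
Unset Printing Implicit Defensive.
Lemma ultra_exists (X : Type) :
  exists U : (list X -> Prop) -> Prop,
    U (fun _ => True) /\
    (forall A B, U A -> U B -> U (fun i => A i /\ B i)) /\
    (forall A B : list X -> Prop, (forall i, A i -> B i) -> U A -> U B) /\
    ~ U (fun _ => False) /\
    (forall A, U A \/ U (fun i => ~ A i)) /\
    (forall x, U (fun i => List.In x i)).
Proof.
set F := fun S : list X -> Prop => exists l : list X,
   forall i, (forall x, List.In x l -> List.In x i) -> S i.
have FF : filter.ProperFilter F.
  apply: filter.Build_ProperFilter_ex.
    move=> P [l Hl]; exists l; apply: Hl => //.
  split.
  - by exists nil.
  - move=> A B [l1 H1] [l2 H2]; exists (l1 ++ l2) => i Hi; split.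
      by apply: H1 => x Hx; apply: Hi; apply: List.in_or_app; left.
    by apply: H2 => x Hx; apply: Hi; apply: List.in_or_app; right.
  - move=> A B AB [l Hl]; exists l => i Hi; apply: AB; exact: Hl.
have [G [GU FG]] := filter.ultraFilterLemma FF.
have GP : filter.ProperFilter G by apply: filter.ultra_proper.
have GF : filter.Filter G by apply: filter.filter_filter.
exists G; split; [|split; [|split; [|split; [|split]]]].
- exact: (@filter.filterT _ G GF).
- move=> A B HA HB; exact: (@filter.filterI _ G GF A B HA HB).
- move=> A B AB HA; exact: (@filter.filterS _ G GF A B AB HA).
- exact: (@filter.filter_not_empty _ G GP).
- move=> A; exact: (filter.in_ultra_setVsetC A GU).
- move=> x; apply: FG; exists (x :: nil) => i Hi; apply: Hi; by left.
Qed.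
Fixpoint trename (L : signature) (V W : Type) (s : V -> W) (t : term L V) : term L W :=
  match t with
  | tvar x => tvar L (s x)
  | tapp f args => @tapp L W f (fun i => trename s (args i))
  end.

Definition arename (L : signature) (V W : Type) (s : V -> W) (a : atomic L V) : atomic L W :=
  match a with
  | aeq t u => aeq (trename s t) (trename s u)
  | arel R args => arel (fun i => trename s (args i))
  end.

Lemma teval_rename (L : signature) (M : structure L) (V W : Type) (s : V -> W)
  (v : W -> M) t : teval v (trename s t) = teval (fun x => v (s x)) t.
Proof.
elim: t => [x|f args IH] //=; congr funI; apply: functional_extensionality => i; exact: IH.
Qed.

Lemma aholds_rename (L : signature) (M : structure L) (V W : Type) (s : V -> W)
  (v : W -> M) a : aholds v (arename s a) <-> aholds (fun x => v (s x)) a.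
Proof.
case: a => [t u|R args] /=; first by rewrite !teval_rename.
have -> : (fun i => teval v (trename s (args i))) = (fun i => teval (fun x => v (s x)) (args i)).
  by apply: functional_extensionality => i; rewrite teval_rename.
by [].
Qed.

Lemma pqf_sel (L : signature) (M : structure L) (V : Type) (v : V -> M) (th : pqf L V) :
  pholds v th -> exists Phi : list (atomic L V), List.Forall (aholds v) Phi /\
   forall (M' : structure L) (v' : V -> M'), List.Forall (aholds v') Phi -> pholds v' th.
Proof.
elim: th => [a|| |p IHp q IHq|p IHp q IHq] /=.
- move=> H; exists (a :: nil); split; first by constructor.
  by move=> M' v' H'; inversion H'.
- by move=> _; exists nil; split.
- by [].
- move=> [/IHp [l1 [H1 K1]] /IHq [l2 [H2 K2]]]; exists (l1 ++ l2); split.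
    by apply/List.Forall_app.
  by move=> M' v' /List.Forall_app [] /K1 ? /K2 ?.
- case=> [/IHp [l [H K]]|/IHq [l [H K]]]; exists l; split => // M' v' /K; auto.
Qed.

Lemma triv_aholds (L : signature) (p : nat -> trivial_structure L) a : aholds p a.
Proof. case: a => [t u|R args] /=; last by []. by case: (teval p t); case: (teval p u). Qed.

Lemma part1 (L : signature) (A B : structure L) (f : A -> B) :
  geom_closed f -> ~ embeds (trivial_structure L) B -> immersion f.
Proof.
move=> gc n1 th p [yB HB].
case: (classic (exists y, pholds (join p y) th)) => // Hno; exfalso.
have [Phi [HPhi Kphi]] := pqf_sel HB.
set sg := fun x : nat + nat => match x with inl i => inl i | inr j => inr j.+2 end.
set Phi' := List.map (arename sg) Phi.
have gA : forall psi, geom_holds p Phi' psi.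
  move=> psi y Hy; exfalso; apply: Hno; exists (fun j => y j.+2); apply: Kphi.
  move: Hy; rewrite /Phi' List.Forall_map => Hy; apply: List.Forall_impl Hy => a.
  rewrite aholds_rename.
  have -> : (fun x => join p y (sg x)) = join p (fun j => y j.+2) by
    apply: functional_extensionality => -[].
  by [].
have gB : forall psi b1 b2, aholds (join (f \o p)
     (fun j => match j with 0 => b1 | 1 => b2 | k.+2 => yB k end)) psi.
  move=> psi b1 b2; apply: (gc _ _ _ (gA psi)).
  rewrite /Phi' List.Forall_map; apply: List.Forall_impl HPhi => a.
  rewrite aholds_rename.
  have -> : (fun x => join (f \o p) (fun j => match j with 0 => b1 | 1 => b2 | k.+2 => yB k end) (sg x)) = join (f \o p) yB by
    apply: functional_extensionality => -[].
  by [].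
have single : forall b1 b2 : B, b1 = b2.
  by move=> b1 b2; exact: (gB (aeq (tvar _ (inr 0)) (tvar _ (inr 1))) b1 b2).
have full : forall R (b : B), @relI L B R (fun _ => b).
  by move=> R b; exact: (gB (arel (fun _ => tvar _ (inr 0))) b b).
have [b0] := nonempty B.
apply: n1; exists (fun _ => b0) => a q; split => _; last exact: triv_aholds.
case: a => [t u|R args] /=; first exact: single.
have -> : (fun i => teval (fun x => b0) (args i)) = (fun _ => b0).
  by apply: functional_extensionality => i; exact: single.
exact: full.
Qed.
Section Ultraproduct.
Variable L : signature.
Variable I : Type.
Variable M : I -> structure L.
Variable U : (I -> Prop) -> Prop.
Hypothesis UT : U (fun _ => True).
Hypothesis UI : forall A B, U A -> U B -> U (fun i => A i /\ B i).
Hypothesis US : forall A B : I -> Prop, (forall i, A i -> B i) -> U A -> U B.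
Hypothesis U0 : ~ U (fun _ => False).
Hypothesis Uult : forall A, U A \/ U (fun i => ~ A i).

Definition cls (g : forall i, M i) : (forall i, M i) -> Prop :=
  fun h => U (fun i => g i = h i).
Definition UC := {S : (forall i, M i) -> Prop | exists g, S = cls g}.
Definition mk (g : forall i, M i) : UC := exist _ (cls g) (ex_intro _ g erefl).
Definition rep (x : UC) : forall i, M i :=
  proj1_sig (constructive_indefinite_description _ (proj2_sig x)).

Lemma UC_inj (x y : UC) : proj1_sig x = proj1_sig y -> x = y.
Proof. case: x => [S HS]; case: y => [S' HS'] /= E; subst; f_equal; exact: proof_irrelevance. Qed.

Lemma mk_rep x : mk (rep x) = x.
Proof.
apply: UC_inj => /=; rewrite /rep.
by case: (constructive_indefinite_description _ _) => g /= ->.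
Qed.

Lemma mk_eq g h : mk g = mk h <-> U (fun i => g i = h i).
Proof.
split.
- move=> E; have : proj1_sig (mk g) h by rewrite E /= /cls; apply: US UT.
  by [].
- move=> H; apply: UC_inj => /=; apply: functional_extensionality => k.
  apply: propositional_extensionality; rewrite /cls; split => K.
  + apply: US (UI H K) => i [-> ->] //.
  + apply: US (UI H K) => i [-> ->] //.
Qed.

Lemma rep_mk g : U (fun i => rep (mk g) i = g i).
Proof. by apply/mk_eq; rewrite mk_rep. Qed.

Lemma U_seq (K : eqType) (s : seq K) (S : K -> I -> Prop) :
  (forall k, U (S k)) -> U (fun i => forall k, k \in s -> S k i).
Proof.
move=> H; elim: s => [|x s IH].
  by apply: US UT.
apply: US (UI (H x) IH) => i [Hx Hs] k; rewrite in_cons => /orP [/eqP -> //|]; exact: Hs.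
Qed.

Lemma U_fin n (S : 'I_n -> I -> Prop) :
  (forall k, U (S k)) -> U (fun i => forall k, S k i).
Proof.
move=> H; apply: US (U_seq (ord_enum n) H) => i Hi k; apply: Hi; exact: mem_ord_enum.
Qed.

Definition pt i : M i := epsilon (nonempty (M i)) (fun _ => True).

Definition Ufun (f : func L) (args : 'I_(farity f) -> UC) : UC :=
  mk (fun i => @funI L (M i) f (fun k => rep (args k) i)).
Definition Urel (R : Defs.rel L) (args : 'I_(rarity R) -> UC) : Prop :=
  U (fun i => @relI L (M i) R (fun k => rep (args k) i)).

Definition Up : structure L := @Defs.Structure L UC (inhabits (mk pt)) Ufun Urel.

Section Terms.
Variable v : nat -> Up.
Variable w : forall i, nat -> M i.
Hypothesis Hw : forall n, v n = mk (fun i => w i n).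

Lemma teval_U t : teval v t = mk (fun i => teval (w i) t).
Proof.
elim: t => [x|f args IH] /=; first exact: Hw.
have -> : (fun k => teval v (args k)) = (fun k => mk (fun i => teval (w i) (args k))).
  by apply: functional_extensionality => k; exact: IH.
rewrite /= /Ufun; apply/mk_eq.
apply: US (U_fin (fun k => rep_mk (fun i => teval (w i) (args k)))) => i Hi.
congr funI; apply: functional_extensionality => k; exact: Hi.
Qed.

Lemma aholds_U a : aholds v a <-> U (fun i => aholds (w i) a).
Proof.
case: a => [t u|R args] /=.
  by rewrite !teval_U mk_eq.
have -> : (fun k => teval v (args k)) = (fun k => mk (fun i => teval (w i) (args k))).
  by apply: functional_extensionality => k; exact: teval_U.
rewrite /= /Urel.
have H := U_fin (fun k => rep_mk (fun i => teval (w i) (args k))).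
split => K.
- apply: US (UI H K) => i [Hi Ki].
  have <- : (fun k => rep (mk (fun i => teval (w i) (args k))) i) = (fun k => teval (w i) (args k)) => //.
  by apply: functional_extensionality => k; exact: Hi.
- apply: US (UI H K) => i [Hi Ki].
  have -> : (fun k => rep (mk (fun i => teval (w i) (args k))) i) = (fun k => teval (w i) (args k)) => //.
  by apply: functional_extensionality => k; exact: Hi.
Qed.
End Terms.

Lemma upd_hyp (v : nat -> Up) (w : forall i, nat -> M i) n a (g : forall i, M i) :
  (forall m, v m = mk (fun i => w i m)) -> a = mk g ->
  forall m, upd v n a m = mk (fun i => upd (w i) n (g i) m).
Proof. by move=> Hw Ha m; rewrite /upd; case: (m == n). Qed.

Lemma U_not A : ~ U A <-> U (fun i => ~ A i).
Proof.
split; first by case: (Uult A).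
move=> H K; apply: U0; apply: US (UI H K) => i [] //.
Qed.

Lemma los (phi : formula L) : forall (v : nat -> Up) (w : forall i, nat -> M i),
  (forall n, v n = mk (fun i => w i n)) ->
  (fholds v phi <-> U (fun i => fholds (w i) phi)).
Proof.
elim: phi => [a||| p IH|p IHp q IHq|p IHp q IHq|p IHp q IHq|n p IH|n p IH] v w Hw /=.
- exact: aholds_U.
- by split.
- by split => // /U0.
- rewrite (IH v w Hw); exact: U_not.
- rewrite (IHp v w Hw) (IHq v w Hw); split.
    by case=> ??; apply: UI.
  by move=> H; split; apply: US H => i [].
- rewrite (IHp v w Hw) (IHq v w Hw); split.
    by case=> H; apply: US H => i; auto.
  move=> H; case: (Uult (fun i => fholds (w i) p)) => Hp; [by left|right].
  by apply: US (UI H Hp) => i [[]].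
- rewrite (IHp v w Hw) (IHq v w Hw); split.
    move=> H; case: (Uult (fun i => fholds (w i) p)) => Hp.
      by apply: US (H Hp) => i ? ?.
    by apply: US Hp => i ? ?.
  by move=> H Hp; apply: US (UI H Hp) => i [] ? ?; auto.
- split.
  + move=> H; apply: NNPP => /U_not K.
    pose g i := epsilon (nonempty (M i)) (fun b => ~ fholds (upd (w i) n b) p).
    have := H (mk g); rewrite (IH _ (fun i => upd (w i) n (g i)) (upd_hyp n Hw erefl)).
    move=> K'; apply: U0; apply: US (UI K K') => i [Ki Ki']; apply: (epsilon_spec (nonempty (M i)) (fun b => ~ fholds (upd (w i) n b) p)) => //.
    by apply: not_all_ex_not.
  + move=> H a; rewrite (IH _ (fun i => upd (w i) n (rep a i)) (upd_hyp n Hw (esym (mk_rep a)))).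
    by apply: US H => i; apply.
- split.
  + case=> a; rewrite (IH _ (fun i => upd (w i) n (rep a i)) (upd_hyp n Hw (esym (mk_rep a)))).
    by apply: US => i Hi; exists (rep a i).
  + move=> H.
    pose g i := epsilon (nonempty (M i)) (fun b => fholds (upd (w i) n b) p).
    exists (mk g); rewrite (IH _ (fun i => upd (w i) n (g i)) (upd_hyp n Hw erefl)).
    by apply: US H => i Hi; apply: (epsilon_spec (nonempty (M i)) (fun b => fholds (upd (w i) n b) p)).
Qed.

End Ultraproduct.

Theorem lemma4p9 (L : signature) :
  (forall (A B : structure L) (f : A -> B),
      homomorphism f -> geom_closed f -> ~ embeds (trivial_structure L) B -> immersion f)
  /\
  (forall T : theory L, strict T ->
   forall (A B : structure L) (f : A -> B),
      models_Tu T A -> models_Tu T B ->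
      homomorphism f -> geom_closed f -> immersion f).
Proof.
split.
  by move=> A B f _ gc n1; exact: part1.
move=> T Hs A B f HA HB _ gc; apply: part1 => //.
move=> [e He].
have Hall : forall Phi : list (atomic L nat), exists p : {M : structure L & carrier M},
   models T (projT1 p) /\ List.Forall (aholds (fun _ => projT2 p)) Phi.
  move=> Phi; apply: NNPP => Hno.
  have Htu : Tu T (List.map (arename (fun _ : nat => 0)) Phi).
    move=> M HM y HF; apply: Hno; exists (existT _ M (y 0)); split => //=.
    move: HF; rewrite List.Forall_map; apply: List.Forall_impl => a.
    by rewrite aholds_rename.
  apply: (HB _ Htu (fun _ => e tt)).
  rewrite List.Forall_map; apply/List.Forall_forall => a _.
  rewrite aholds_rename /=.
  have := proj1 (He a (fun _ => tt)) (triv_aholds _ a); exact.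
pose I := list (atomic L nat).
pose pr (i : I) := proj1_sig (constructive_indefinite_description _ (Hall i)).
have prP : forall i, models T (projT1 (pr i)) /\ List.Forall (aholds (fun _ => projT2 (pr i))) i.
  move=> i; exact: proj2_sig (constructive_indefinite_description _ (Hall i)).
have [U [UT [UI [US [U0 [Uult Ub]]]]]] := ultra_exists (atomic L nat).
pose Mi := fun i : I => projT1 (pr i).
pose c : forall i, Mi i := fun i => projT2 (pr i).
apply: (Hs (Up Mi U)).
- move=> phi Hphi v.
  apply/(@los L I Mi U UT UI US U0 Uult phi v (fun i n => rep (v n) i)).
    by move=> n; rewrite mk_rep.
  by apply: US UT => i _; apply: (proj1 (prP i)).
- exists (fun _ => mk U c) => a p; split => _; last exact: triv_aholds.
  apply/(@aholds_U L I Mi U UT UI US (fun _ => mk U c) (fun i _ => c i)) => //.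
  apply: US (Ub a) => i Hi.
  by have := proj1 (List.Forall_forall _ _) (proj2 (prP i)) a Hi.
Qed.
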